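(* Let $S=s_1,\ldots,s_n$ be a sequence of positive real numbers, let $\alpha>1$, $\gamma>0$, and let $k$ be a positive integer. Let $\beta>0$ and let $L=\ell_1,\ldots,\ell_n$ be an optimal level sequence for $\textsc{Exp}(\alpha,\beta)$. Define \[ \beta'=\frac{n}{\sum_{i=1}^n s_i\alpha^{\ell_i}}. \] Let $\beta^*$ be the optimal parameter of $\textsc{Exp}(\alpha)$ (i.e., $(L^*,\beta^* )$ is an optimal solution of $\textsc{Exp}(\alpha)$ for some $L^*$). Then either $\beta^*\le\min(\beta,\beta')$ or $\beta^*\ge\max(\beta,\beta')$.
   Context: A level sequence is $L=\ell_1,\ldots,\ell_n$ of integers with $0\le\ell_i\le k$; set $\ell_0=0$. The penalty is $\mathrm{pen}(x,y)=\max(y-x,0)\,\gamma\log n$; $p_{\exp}(s;\lambda)=\lambda e^{-\lambda s}$; $\mathrm{score}_{\exp}(L,S;\alpha,\beta,\gamma)=\sum_{i=1}^n\big[-\log p_{\exp}(s_i;\beta\alpha^{\ell_i})+\mathrm{pen}(\ell_{i-1},\ell_i)\big]$. Problem $\textsc{Exp}(\alpha,\beta)$: given $S,\alpha,\beta,\gamma,k$, find a level sequence $L$ minimizing $\mathrm{score}_{\exp}(L,S;\alpha,\beta,\gamma)$. Problem $\textsc{Exp}(\alpha)$: given $S,\alpha,\gamma,k$, find a level sequence $L$ and $\beta>0$ minimizing $\mathrm{score}_{\exp}(L,S;\alpha,\beta,\gamma)$. *)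

(* Defs.v *)
From Stdlib Require Import Reals.
Open Scope R_scope.

Fixpoint sum1 (n : nat) (f : nat -> R) : R :=
  match n with
  | O => 0
  | S m => sum1 m f + f (S m)
  end.

(* A level sequence l_1..l_n (values of L at 1..n), with the convention l_0 = 0
   encoded as L 0 = 0; values of L beyond n are irrelevant. *)
Definition level_seq (n k : nat) (L : nat -> nat) : Prop :=
  L O = O /\ forall i, (1 <= i <= n)%nat -> (L i <= k)%nat.

Definition pen (n : nat) (gamma : R) (x y : nat) : R :=
  Rmax (INR y - INR x) 0 * gamma * ln (INR n).

Definition p_exp (s lam : R) : R := lam * exp (- lam * s).

Definition score_exp (n : nat) (L : nat -> nat) (S : nat -> R)
  (alpha beta gamma : R) : R :=
  sum1 n (fun i => - ln (p_exp (S i) (beta * alpha ^ (L i)))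
                   + pen n gamma (L (i - 1)%nat) (L i)).

Definition opt_Exp_ab (n k : nat) (S : nat -> R) (alpha beta gamma : R)
  (L : nat -> nat) : Prop :=
  level_seq n k L /\
  forall L', level_seq n k L' ->
    score_exp n L S alpha beta gamma <= score_exp n L' S alpha beta gamma.

Definition opt_Exp_a (n k : nat) (S : nat -> R) (alpha gamma : R)
  (L : nat -> nat) (beta : R) : Prop :=
  level_seq n k L /\ 0 < beta /\
  forall L' beta', level_seq n k L' -> 0 < beta' ->
    score_exp n L S alpha beta gamma <= score_exp n L' S alpha beta' gamma.

(* Main.v *)
Require Import Defs.
From Stdlib Require Import Reals Lra Lia.
Open Scope R_scope.

Lemma sum1_plus n f g : sum1 n (fun i => f i + g i) = sum1 n f + sum1 n g.
Proof. induction n; simpl; [lra| rewrite IHn; lra]. Qed.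

Lemma sum1_const n c : sum1 n (fun _ => c) = INR n * c.
Proof. induction n; cbn [sum1]; [simpl; lra|]. rewrite IHn, S_INR. lra. Qed.

Lemma sum1_scal n b f : sum1 n (fun i => b * f i) = b * sum1 n f.
Proof. induction n; simpl; [lra| rewrite IHn; lra]. Qed.

Lemma sum1_ext n f g : (forall i, f i = g i) -> sum1 n f = sum1 n g.
Proof. intros H; induction n; simpl; [lra| rewrite IHn, H; lra]. Qed.

Lemma sum1_pos n f : (1 <= n)%nat -> (forall i, (1 <= i <= n)%nat -> 0 < f i) -> 0 < sum1 n f.
Proof.
  induction n; intros Hn H; [lia|]. simpl.
  destruct n.
  - simpl. assert (0 < f 1%nat) by (apply H; lia). lra.
  - assert (0 < sum1 (S n) f) by (apply IHn; [lia| intros; apply H; lia]).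
    assert (0 < f (S (S n))) by (apply H; lia). lra.
Qed.

Definition A n S alpha (L : nat -> nat) := sum1 n (fun i => S i * alpha ^ (L i)).
Definition C n alpha gamma (L : nat -> nat) :=
  sum1 n (fun i => - ln (alpha ^ (L i)) + pen n gamma (L (i-1)%nat) (L i)).

Lemma score_dec n L S alpha b gamma : 0 < alpha -> 0 < b ->
  score_exp n L S alpha b gamma = - INR n * ln b + b * A n S alpha L + C n alpha gamma L.
Proof.
  intros Ha Hb. unfold score_exp, A, C.
  rewrite <- sum1_scal.
  replace (- INR n * ln b) with (INR n * (- ln b)) by ring.
  rewrite <- sum1_const, <- !sum1_plus.
  apply sum1_ext; intros i. unfold p_exp.
  assert (0 < alpha ^ L i) by (apply pow_lt; lra).
  rewrite ln_mult; [| apply Rmult_lt_0_compat; lra | apply exp_pos].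
  rewrite ln_mult by lra. rewrite ln_exp. ring.
Qed.

Lemma t_eq1 t : 0 < t -> t - ln t <= 1 -> t = 1.
Proof.
  intros Ht H. destruct (Req_dec (ln t) 0) as [E|E].
  - rewrite <- (exp_ln t Ht), E, exp_0. reflexivity.
  - pose proof (exp_ineq1 _ E). rewrite exp_ln in H0 by lra. lra.
Qed.

Theorem proposition10 (n k : nat) (S : nat -> R) (alpha beta gamma : R)
  (L : nat -> nat) (Lstar : nat -> nat) (betastar : R) :
  (1 <= n)%nat ->
  (forall i, (1 <= i <= n)%nat -> 0 < S i) ->
  1 < alpha -> 0 < gamma -> (1 <= k)%nat -> 0 < beta ->
  opt_Exp_ab n k S alpha beta gamma L ->
  opt_Exp_a n k S alpha gamma Lstar betastar ->
  let beta' := INR n / sum1 n (fun i => S i * alpha ^ (L i)) in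
  betastar <= Rmin beta beta' \/ Rmax beta beta' <= betastar.
Proof.
  intros Hn HS Ha Hg Hk Hb [HL1 HL2] [HLs1 [Hbs HLs2]] beta'.
  assert (Apos : forall M, 0 < A n S alpha M).
  { intros M. apply sum1_pos; auto. intros i Hi.
    apply Rmult_lt_0_compat; [auto| apply pow_lt; lra]. }
  assert (Hnpos : 0 < INR n) by (apply lt_0_INR; lia).
  set (a := A n S alpha L). set (as_ := A n S alpha Lstar).
  pose proof (Apos L) as Hapos. pose proof (Apos Lstar) as Haspos.
  fold a as_ in Hapos, Haspos.
  assert (Hbstar : betastar * as_ = INR n).
  { assert (Hq : 0 < INR n / as_) by (apply Rdiv_lt_0_compat; lra).
    pose proof (HLs2 Lstar (INR n / as_) HLs1 Hq) as H.
    rewrite !score_dec in H by lra. fold as_ in H.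
    set (t := betastar * as_ / INR n).
    assert (Ht : 0 < t) by (unfold t; apply Rdiv_lt_0_compat; [apply Rmult_lt_0_compat|]; lra).
    assert (Eb : betastar = t * (INR n / as_)) by (unfold t; field; lra).
    rewrite Eb in H at 1. rewrite ln_mult in H by lra.
    replace (INR n / as_ * as_) with (INR n) in H by (field; lra).
    assert (t * (INR n / as_) * as_ = t * INR n) by (field; lra).
    rewrite <- Eb in H0. rewrite H0 in H.
    assert (INR n * (t - ln t) <= INR n * 1) by lra.
    apply Rmult_le_reg_l in H1; [|lra].
    pose proof (t_eq1 t Ht H1). unfold t in H2.
    apply (Rmult_eq_compat_r (INR n)) in H2. field_simplify in H2; lra. }
  assert (Hkey : (beta - betastar) * (a - as_) <= 0).
  { pose proof (HL2 Lstar HLs1) as H1. pose proof (HLs2 L beta HL1 Hb) as H2.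
    pose proof (HLs2 L betastar HL1 Hbs) as H3.
    rewrite !score_dec in H1, H3 by lra. fold a as_ in H1, H3.
    nra. }
  assert (Hb' : beta' = INR n / a) by reflexivity.
  destruct (Rle_dec betastar (Rmin beta beta')) as [E|E]; [left; exact E|].
  destruct (Rle_dec (Rmax beta beta') betastar) as [F|F]; [right; exact F|].
  exfalso. apply Rnot_le_lt in E, F.
  unfold Rmin, Rmax in *.
  destruct (Rle_dec beta beta').
  -
    assert (betastar * a < INR n).
    { rewrite Hb' in F. apply (Rmult_lt_compat_r a) in F; [|lra].
      replace (INR n / a * a) with (INR n) in F by (field; lra). lra. }
    nra.
  - assert (INR n < betastar * a).
    { rewrite Hb' in E. apply (Rmult_lt_compat_r a) in E; [|lra].
      replace (INR n / a * a) with (INR n) in E by (field; lra). lra. }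
    nra.
Qed.
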